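(* Let $r,s,i$ be positive integers. Then there is a constant $\alpha^0(r,s,i)$ such that for every connected $(K_{1,r},K_s^h)$-free graph $G$ and every vertex $c\in V(G)$, $\alpha_i^0(G,c)<\alpha^0(r,s,i)$.
   Context: All graphs are finite, simple, undirected. $N_G^i(c)$ denotes the set of vertices of $G$ at distance exactly $i$ from $c$. $\alpha_i^0(G,c)$ is the maximum size of an independent set $M^0\subseteq N_G^i(c)$ of $G$. $K_{1,r}$ is the star with $r$ leaves; $K_s^h$ is the graph obtained from the complete graph $K_s$ by attaching a pendant edge to each of its vertices. $(K_{1,r},K_s^h)$-free means no induced subgraph isomorphic to $K_{1,r}$ or $K_s^h$. *)

(* Defs.v *)
From mathcomp Require Import all_boot.
Set Implicit Arguments. Unset Strict Implicit. Unset Printing Implicit Defensive.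

Section Graphs.
Variables (T : finType) (e : rel T).

Definition simple_graph : Prop := symmetric e /\ irreflexive e.

Definition connected_graph : Prop := forall x y : T, connect e x y.

Definition walk_len (x y : T) (n : nat) : bool :=
  [exists p : n.-tuple T, path e x p && (last x p == y)].

Definition dist_eq (x y : T) (n : nat) : bool :=
  walk_len x y n && [forall m : 'I_n, ~~ walk_len x y m].

Definition Nbhd (c : T) (i : nat) : {set T} :=
  [set v | dist_eq c v i].

Definition independent (M : {set T}) : bool :=
  [forall x in M, forall y in M, ~~ e x y].

Definition alpha0 (c : T) (i : nat) : nat :=
  \max_(M : {set T} | (M \subset Nbhd c i) && independent M) #|M|.

Definition has_induced_star (r : nat) : Prop :=
  exists (v : T) (f : 'I_r -> T),
    injective f /\ (forall j, f j != v) /\ (forall j, e v (f j)) /\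
    (forall j k, j != k -> ~~ e (f j) (f k)).

(* G contains an induced K_s^h : a clique a_0..a_{s-1}, each a_j with a
   pendant neighbour b_j, all 2s vertices distinct, and no other edges *)
Definition has_induced_Ksh (s : nat) : Prop :=
  exists (a b : 'I_s -> T),
    injective a /\ injective b /\ (forall j k, a j != b k) /\
    (forall j k, j != k -> e (a j) (a k)) /\
    (forall j, e (a j) (b j)) /\
    (forall j k, j != k -> ~~ e (a j) (b k)) /\
    (forall j k, j != k -> ~~ e (b j) (b k)).

Definition star_Ksh_free (r s : nat) : Prop :=
  ~ has_induced_star r /\ ~ has_induced_Ksh s.

End Graphs.

(* Main.v *)
Require Import Defs.
From mathcomp Require Import all_boot.
From mathcomp Require Import zify.
Set Implicit Arguments. Unset Strict Implicit. Unset Printing Implicit Defensive.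

Lemma walk_lenP (T : finType) (e : rel T) x y n :
  reflect (exists2 s : seq T, size s = n & path e x s && (last x s == y)) (walk_len e x y n).
Proof.
apply: (iffP existsP) => [[p hp]|[s hs hp]].
  by exists (tval p); rewrite ?size_tuple.
have hs' : size s == n by rewrite hs.
by exists (Tuple hs').
Qed.

Lemma parent_ex (T : finType) (e : rel T) c m i :
  m \in Nbhd e c i.+1 -> exists2 u, u \in Nbhd e c i & e u m.
Proof.
rewrite inE /dist_eq => /andP [/walk_lenP [s hs /andP [hp hl]] /forallP hmin].
case/lastP: s hs hp hl => [|s' y]; first by [].
rewrite size_rcons => -[hs]; rewrite rcons_path last_rcons => /andP [hp he] /eqP hy.
exists (last c s'); last by rewrite -hy.
rewrite inE /dist_eq; apply/andP; split.
  by apply/walk_lenP; exists s' => //; rewrite hp eqxx.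
apply/forallP => k; apply/negP => /walk_lenP [t ht /andP [tp /eqP tl]].
have hk : k.+1 < i.+1 by rewrite ltnS ltn_ord.
move: (hmin (Ordinal hk)) => /negP; apply; apply/walk_lenP.
exists (rcons t m); first by rewrite size_rcons ht.
by rewrite rcons_path tp tl -hy he last_rcons eqxx.
Qed.

Definition par (T : finType) (e : rel T) c i (m : T) :=
  odflt m [pick u | (u \in Nbhd e c i) && e u m].

Lemma parP (T : finType) (e : rel T) c i m :
  m \in Nbhd e c i.+1 -> par e c i m \in Nbhd e c i /\ e (par e c i m) m.
Proof.
move=> hm; rewrite /par; case: pickP => [u /andP [h1 h2] //|none].
have [u hu hum] := parent_ex hm.
by have := none u; rewrite hu hum.
Qed.

Lemma Nbhd0 (T : finType) (e : rel T) c v : v \in Nbhd e c 0 -> v = c.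
Proof.
rewrite inE /dist_eq => /andP [/walk_lenP [s hs /andP [_ /eqP <-]] _].
by case: s hs.
Qed.

Lemma indepP (T : finType) (e : rel T) M :
  independent e M -> {in M &, forall x y, ~~ e x y}.
Proof.
move=> /forall_inP H x y xM yM.
by move/forall_inP: (H x xM) => /(_ y yM).
Qed.
Lemma ramsey (T : finType) (E : rel T) (Esym : symmetric E) :
  forall n a b (A : {set T}), a + b <= n -> 2 ^ (a + b) <= #|A| ->
  exists2 B : {set T}, B \subset A &
    ((#|B| = a /\ {in B &, forall x y, x != y -> E x y}) \/
     (#|B| = b /\ {in B &, forall x y, x != y -> ~~ E x y})).
Proof.
elim=> [|n IH] a b A.
  move=> hab _; have ->: a = 0 by lia.
  exists set0; first exact: sub0set.
  by left; split; [rewrite cards0 | move=> x y; rewrite in_set0].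
case: a => [|a] hab hA.
  exists set0; first exact: sub0set.
  by left; split; [rewrite cards0 | move=> x y; rewrite in_set0].
case: b hab hA => [|b] hab hA.
  exists set0; first exact: sub0set.
  by right; split; [rewrite cards0 | move=> x y; rewrite in_set0].
have: 0 < #|A| by apply: leq_trans hA; rewrite expn_gt0.
case/card_gt0P => x xA.
pose N := [set y in A :\ x | E x y].
pose NN := [set y in A :\ x | ~~ E x y].
have hcard : #|N| + #|NN| = #|A| - 1.
  rewrite /N /NN (cardsD1 x A) xA add1n subn1 /= -(cardsID [set y | E x y] (A :\ x)).
  by congr (_ + _); apply: eq_card => y; rewrite !inE andbC.
have hsplit : 2 ^ (a + b.+1) <= #|N| \/ 2 ^ (a.+1 + b) <= #|NN|.
  rewrite addnS addSn; move: hA hcard; rewrite addnS addSn !expnS => hA hcard.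
  lia.
case: hsplit => hs.
- have hab2 : a + b.+1 <= n by lia.
  have [B BN hB] := IH a b.+1 N hab2 hs.
  case: hB => [[cB clB]|[cB inB]].
  + exists (x |: B).
      apply/subsetP => y; rewrite !inE => /orP [/eqP -> //|/(subsetP BN)].
      by rewrite !inE => /andP [/andP [_ ->]].
    have xB : x \notin B by apply/negP => /(subsetP BN); rewrite !inE eqxx.
    left; split; first by rewrite cardsU1 xB cB.
    have Ex : forall y, y \in B -> E x y by move=> y /(subsetP BN); rewrite !inE => /andP [].
    move=> y z; rewrite !inE => /orP [/eqP ->|yB] /orP [/eqP ->|zB]; rewrite ?eqxx //.
    * by move=> _; apply: Ex.
    * by move=> _; rewrite Esym; apply: Ex.
    * by apply: clB.
  + exists B => //; last by right.
    apply: subset_trans BN _; apply/subsetP => y; by rewrite !inE => /andP [/andP [_ ->]].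
- have hab3 : a.+1 + b <= n by lia.
  have [B BN hB] := IH a.+1 b NN hab3 hs.
  case: hB => [[cB clB]|[cB inB]].
  + exists B => //; last by left.
    apply: subset_trans BN _; apply/subsetP => y; by rewrite !inE => /andP [/andP [_ ->]].
  + exists (x |: B).
      apply/subsetP => y; rewrite !inE => /orP [/eqP -> //|/(subsetP BN)].
      by rewrite !inE => /andP [/andP [_ ->]].
    have xB : x \notin B by apply/negP => /(subsetP BN); rewrite !inE eqxx.
    right; split; first by rewrite cardsU1 xB cB.
    have Ex : forall y, y \in B -> ~~ E x y by move=> y /(subsetP BN); rewrite !inE => /andP [].
    move=> y z; rewrite !inE => /orP [/eqP ->|yB] /orP [/eqP ->|zB]; rewrite ?eqxx //.
    * by move=> _; apply: Ex.
    * by move=> _; rewrite Esym; apply: Ex.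
    * by apply: inB.
Qed.

Lemma orient (T : finType) (D : rel T) (F : T -> nat) (Finj : injective F)
  (r K : nat) (hr : 0 < r) (A : {set T})
  (Hdom : forall B : {set T}, B \subset A -> #|B| = r -> forall x, x \in B ->
            (forall y, y \in B -> y != x -> D x y) -> False) :
  2 ^ (r + K) <= #|A| ->
  exists2 S : {set T}, S \subset A & #|S| = K /\ {in S &, forall x y, F x < F y -> ~~ D x y}.
Proof.
move=> hA.
pose E := fun x y => (F x < F y) && D x y || (F y < F x) && D y x.
have Esym : symmetric E by move=> x y; rewrite /E orbC.
have [B BA [[cB clB]|[cB inB]]] := ramsey Esym (leqnn (r + K)) hA.
- exfalso.
  have : 0 < #|B| by rewrite cB.
  case/card_gt0P => x0 x0B.
  case: (@arg_minnP T x0 (fun x => x \in B) F x0B) => m0 m0B minm0.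
  apply: (Hdom B BA cB m0 m0B) => y yB ym0.
  have := clB m0 y m0B yB; rewrite eq_sym => /(_ ym0).
  case/orP => [/andP [_ ->] //|/andP [lt _]].
  by have := minm0 y yB; rewrite leqNgt lt.
- exists B => //; split => // x y xB yB lt.
  have xy : x != y by apply/negP => /eqP exy; rewrite exy ltnn in lt.
  have := inB x y xB yB xy; rewrite /E lt /=.
  by apply: contra => ->.
Qed.

Lemma nodom (T : finType) (D : rel T) (r K : nat) (hr : 0 < r) (A : {set T})
  (Hdom : forall B : {set T}, B \subset A -> #|B| = r -> forall x, x \in B ->
            (forall y, y \in B -> y != x -> D x y) -> False) :
  2 ^ (r + 2 ^ (r + K)) <= #|A| ->
  exists2 S : {set T}, S \subset A & #|S| = K /\ {in S &, forall x y, x != y -> ~~ D x y}.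
Proof.
move=> hA.
have F1inj : injective (fun x : T => nat_of_ord (enum_rank x)).
  by move=> x y /val_inj /enum_rank_inj.
have [S1 S1A [cS1 h1]] := orient F1inj hr Hdom hA.
have F2inj : injective (fun x : T => #|T| - enum_rank x).
  move=> x y h; apply: F1inj.
  have hx : enum_rank x < #|T| := ltn_ord _; have hy : enum_rank y < #|T| := ltn_ord _. lia.
have Hdom2 : forall B : {set T}, B \subset S1 -> #|B| = r -> forall x, x \in B ->
            (forall y, y \in B -> y != x -> D x y) -> False.
  by move=> B BS; apply: Hdom; apply: subset_trans BS S1A.
have hS1 : 2 ^ (r + K) <= #|S1| by rewrite cS1.
have [S2 S2S1 [cS2 h2]] := orient F2inj hr Hdom2 hS1.
exists S2; first exact: subset_trans S2S1 S1A.
split => // x y xS yS xy.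
have xS1 := subsetP S2S1 x xS; have yS1 := subsetP S2S1 y yS.
have : (enum_rank x : nat) != enum_rank y.
  by apply: contra xy => /eqP /val_inj /enum_rank_inj ->.
rewrite neq_ltn => /orP [lt|lt].
- by apply: h1.
- apply: h2 => //.
  have hx : enum_rank x < #|T| := ltn_ord _; have hy : enum_rank y < #|T| := ltn_ord _. lia.
Qed.

Fixpoint fb (r s i : nat) : nat :=
  match i with 0 => 2 | i'.+1 => 2 ^ (r + 2 ^ (r + 2 ^ (s + fb r s i'))) end.

Lemma fb_gt0 r s i : 0 < fb r s i.
Proof. by case: i => [|i] //=; rewrite expn_gt0. Qed.

Lemma bound (T : finType) (e : rel T) (hse : simple_graph e) r s (hr : 0 < r)
  (hfree : star_Ksh_free e r s) c :
  forall i (M : {set T}), M \subset Nbhd e c i -> independent e M -> #|M| < fb r s i.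
Proof.
case: hse => esy eirr; case: hfree => nostar noksh.
elim=> [|i IH] M MN Mind.
  rewrite /=; apply: (@leq_ltn_trans #|[set c]|); last by rewrite cards1.
  by apply: subset_leq_card; apply/subsetP => v /(subsetP MN) /Nbhd0 ->; rewrite inE.
rewrite ltnNge; apply/negP => hM.
pose p := par e c i.
have hp : forall m, m \in M -> p m \in Nbhd e c i /\ e (p m) m.
  by move=> m /(subsetP MN); apply: parP.
have inM := indepP Mind.
pose D := fun x y => e (p x) y.
have Hdom : forall B : {set T}, B \subset M -> #|B| = r -> forall x, x \in B ->
            (forall y, y \in B -> y != x -> D x y) -> False.
  move=> B BM cB x xB hx; apply: nostar.
  exists (p x), (fun j => enum_val (cast_ord (esym cB) j)).
  have adj : forall j, e (p x) (enum_val (cast_ord (esym cB) j)).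
    move=> j; set y := enum_val _.
    have yB : y \in B by apply: enum_valP.
    case: (eqVneq y x) => [->|yx]; first by case: (hp x (subsetP BM x xB)).
    exact: hx.
  split; first by move=> j k /enum_val_inj /(congr1 val) /= h; apply: val_inj.
  split; first by move=> j; apply/negP => /eqP h; have := adj j; rewrite h eirr.
  split; first exact: adj.
  move=> j k _; apply: inM; apply: (subsetP BM); apply: enum_valP.
have [S SM [cS hS]] := nodom hr Hdom hM.
have pinj : {in S &, injective p}.
  move=> x y xS yS hxy; case: (eqVneq x y) => // nxy.
  have := hS x y xS yS nxy; rewrite /D hxy.
  by case: (hp y (subsetP SM y yS)) => _ ->.
pose E := fun x y => e (p x) (p y).
have Esym : symmetric E by move=> x y; rewrite /E esy.
have hS2 : 2 ^ (s + fb r s i) <= #|S| by rewrite cS.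
have [B BS [[cB clB]|[cB inB]]] := ramsey Esym (leqnn _) hS2.
- apply: noksh.
  pose b := fun j : 'I_s => enum_val (cast_ord (esym cB) j).
  have bB : forall j, b j \in B by move=> j; apply: enum_valP.
  have bS : forall j, b j \in S by move=> j; apply: (subsetP BS).
  have bM : forall j, b j \in M by move=> j; apply: (subsetP SM).
  have binj : injective b by move=> j k /enum_val_inj /(congr1 val) /= h; apply: val_inj.
  exists (fun j => p (b j)), b.
  split; first by move=> j k /(pinj _ _ (bS j) (bS k)) /binj.
  split; first exact: binj.
  split.
    move=> j k; apply/negP => /eqP h.
    case: (eqVneq j k) => [ejk|njk].
      by have := (hp _ (bM j)).2; rewrite h ejk eirr.
    by have := (hp _ (bM j)).2; rewrite h (negbTE (inM _ _ (bM k) (bM j))).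
  split.
    move=> j k njk; apply: clB; [exact: bB|exact: bB|].
    by apply: contra njk => /eqP /binj ->.
  split; first by move=> j; exact: (hp _ (bM j)).2.
  split.
    move=> j k njk; apply: hS; [exact: bS|exact: bS|].
    by apply: contra njk => /eqP /binj ->.
  by move=> j k _; apply: inM.
- pose P := p @: B.
  have cP : #|P| = fb r s i.
    by rewrite card_in_imset // => x y xB yB; apply: pinj; apply: (subsetP BS).
  have PN : P \subset Nbhd e c i.
    apply/subsetP => u /imsetP [x xB ->].
    exact: (hp x (subsetP SM x (subsetP BS x xB))).1.
  have Pind : independent e P.
    apply/forall_inP => u /imsetP [x xB ->]; apply/forall_inP => v /imsetP [y yB ->].
    case: (eqVneq x y) => [->|nxy]; first by rewrite eirr.
    exact: inB.
  by have := IH P PN Pind; rewrite cP ltnn.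
Qed.

Theorem corollary1 (r s i : nat) (hr : 0 < r) (hs : 0 < s) (hi : 0 < i) :
  exists A : nat,
    forall (T : finType) (e : rel T),
      simple_graph e -> connected_graph e -> star_Ksh_free e r s ->
      forall c : T, alpha0 e c i < A.
Proof.
exists (fb r s i) => T e hse _ hfree c.
have hpos := fb_gt0 r s i.
apply: (@leq_ltn_trans (fb r s i).-1); last by rewrite prednK.
apply/bigmax_leqP => M /andP [h1 h2].
have := bound hse hr hfree h1 h2; lia.
Qed.
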